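(* Let $R$ be the ring of integers of a nonarchimedean local field $F$ of characteristic not $2$ in which $2$ is a prime element, and assume $R\ne\mathbb{Z}_2$. For any $n\ge 3$, the $R$-lattice $\mathbb{H}^{n-1}\perp\langle 1,-1\rangle$ is primitively $n$-universal. In particular, $u^\ast_R(n) = 2n$ for any $n\ge 3$.
   Context: An $R$-lattice is a finitely generated $R$-submodule of a quadratic space $(V,B)$ over $F$, assumed integral ($B(L,L)\subseteq R$) and nondegenerate. A representation is an $R$-linear map preserving $B$; it is primitive if its image is a direct summand. A lattice is primitively $n$-universal if it primitively represents every $R$-lattice of rank $n$; $u^\ast_R(n)$ is the minimal rank of such a lattice. $\mathbb{H}$ is the binary lattice with Gram matrix $\begin{pmatrix}0&1\\1&0\end{pmatrix}$, $\mathbb{H}^{k}$ the orthogonal sum of $k$ copies, and $\langle a_1,\dots,a_k\rangle$ the lattice with diagonal Gram matrix $\operatorname{diag}(a_1,\dots,a_k)$. *)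

(* Defs.v *)
From HB Require Import structures.
From mathcomp Require Import all_boot all_order all_algebra.
Set Implicit Arguments. Unset Strict Implicit. Unset Printing Implicit Defensive.
Import Order.TTheory GRing.Theory Num.Theory.
Local Open Scope ring_scope.

Definition dvdR (R : comRingType) (a b : R) : Prop := exists c : R, b = a * c.

(* R is the ring of integers of a nonarchimedean local field F = Frac R
   of characteristic not 2 in which 2 is a prime element (uniformizer):
   - 2 <> 0 in R  (char F <> 2; F is the fraction field of the domain R)
   - 2 is not a unit, and every nonzero element is a unit times a power of 2
     (R is a discrete valuation ring with uniformizer 2)
   - R is complete for the 2-adic topology
   - the residue field R/2R is finite. *)
Definition local_ring_of_integers_2prime (R : idomainType) : Prop :=
  [/\ (2 : R) != 0,
      (2 : R) \isn't a GRing.unit,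
      (forall x : R, x != 0 ->
         exists (k : nat) (u : R), u \is a GRing.unit /\ x = u * 2 ^+ k),
      (forall a : nat -> R, (forall n, dvdR (2 ^+ n) (a n.+1 - a n)) ->
         exists l : R, forall n, dvdR (2 ^+ n) (l - a n)) &
      (exists s : seq R, forall x : R, exists2 r, r \in s & dvdR 2 (x - r))].

(* R <> Z_2: for such R (unramified over Z_2) this means the residue
   field R/2R is not F_2, i.e. some residue class is neither 0 nor 1. *)
Definition not_Z2 (R : idomainType) : Prop :=
  exists x : R, ~ dvdR 2 x /\ ~ dvdR 2 (x - 1).

(* An R-lattice of rank m, given by its Gram matrix w.r.t. a basis
   (over a DVR every lattice is free): symmetric, entries in R (integral),
   nondegenerate. *)
Definition lattice (R : idomainType) (m : nat) (G : 'M[R]_m) : Prop :=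
  G^T = G /\ \det G != 0.

(* A representation of L (Gram G, rank n) by M (Gram M, rank m):
   an R-linear map R^n -> R^m, v |-> v *m X, preserving B. It is primitive
   iff its image is a direct summand, i.e. the map is split injective:
   there is Y with X *m Y = 1. *)
Definition represents (R : idomainType) (n m : nat) (G : 'M[R]_n) (M : 'M[R]_m)
  (X : 'M[R]_(n, m)) : Prop := X *m M *m X^T = G.

Definition prim_represents (R : idomainType) (n m : nat) (G : 'M[R]_n)
  (M : 'M[R]_m) : Prop :=
  exists X : 'M[R]_(n, m),
    represents G M X /\ exists Y : 'M[R]_(m, n), X *m Y = 1%:M.

Definition prim_n_universal (R : idomainType) (n m : nat) (M : 'M[R]_m) : Prop :=
  forall G : 'M[R]_n, lattice G -> prim_represents G M.

Definition u_star_eq (R : idomainType) (n k : nat) : Prop :=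
  (exists M : 'M[R]_k, lattice M /\ prim_n_universal n M) /\
  (forall (m : nat) (M : 'M[R]_m), lattice M -> prim_n_universal n M -> (k <= m)%N).

Definition Hplane (R : idomainType) : 'M[R]_2 :=
  \matrix_(i < 2, j < 2) (if i == j then 0 else 1).

Definition orth (R : idomainType) (a b : nat) (A : 'M[R]_a) (B : 'M[R]_b)
  : 'M[R]_(a + b) := block_mx A 0 0 B.

Fixpoint Hpow (R : idomainType) (k : nat) : 'M[R]_(k.*2) :=
  match k return 'M[R]_(k.*2) with
  | 0 => 0
  | k'.+1 => orth (Hplane R) (Hpow R k')
  end.

Definition diag2 (R : idomainType) (a b : R) : 'M[R]_2 :=
  \matrix_(i < 2, j < 2) (if i == j then (if i == 0 then a else b) else 0).

(* Main.v *)
Require Import Defs.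
From HB Require Import structures.
From Stdlib Require Import Classical ClassicalEpsilon.
From mathcomp Require Import all_boot all_order all_algebra.
From mathcomp Require Import ring perm fraction zify.
Set Implicit Arguments. Unset Strict Implicit. Unset Printing Implicit Defensive.
Import Order.TTheory GRing.Theory Num.Theory.
Local Open Scope ring_scope.


Lemma dvdR0 (R : idomainType) (a : R) : dvdR a 0.
Proof. by exists 0; rewrite mulr0. Qed.
Lemma dvdRD (R : idomainType) (a x y : R) : dvdR a x -> dvdR a y -> dvdR a (x + y).
Proof. by move=> [c ->] [d ->]; exists (c + d); rewrite mulrDr. Qed.
Lemma dvdRN (R : idomainType) (a x : R) : dvdR a x -> dvdR a (- x).
Proof. by move=> [c ->]; exists (- c); rewrite mulrN. Qed.
Lemma dvdRB (R : idomainType) (a x y : R) : dvdR a x -> dvdR a y -> dvdR a (x - y).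
Proof. by move=> hx hy; apply: dvdRD => //; apply: dvdRN. Qed.
Lemma dvdRMl (R : idomainType) (a x y : R) : dvdR a x -> dvdR a (y * x).
Proof. by move=> [c ->]; exists (y * c); rewrite mulrCA. Qed.
Lemma dvdRMr (R : idomainType) (a x y : R) : dvdR a x -> dvdR a (x * y).
Proof. by move=> h; rewrite mulrC; apply: dvdRMl. Qed.
Lemma dvdR_mul (R : idomainType) (a : R) y : dvdR a (a * y).
Proof. by exists y. Qed.
Lemma dvdR_refl (R : idomainType) (a : R) : dvdR a a.
Proof. by exists 1; rewrite mulr1. Qed.
Lemma dvdR_trans (R : idomainType) (a b c : R) : dvdR a b -> dvdR b c -> dvdR a c.
Proof. by move=> [x ->] [y ->]; exists (x * y); rewrite mulrA. Qed.
Lemma dvdRMM (R : idomainType) (a b x y : R) : dvdR a x -> dvdR b y -> dvdR (a * b) (x * y).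
Proof. by move=> [c ->] [d ->]; exists (c * d); rewrite mulrACA. Qed.


Lemma two_nunit (R : idomainType) : local_ring_of_integers_2prime R -> (2:R) \isn't a GRing.unit.
Proof. by case. Qed.

Lemma unit_nev (R : idomainType) (HR : local_ring_of_integers_2prime R) (x : R) :
  x \is a GRing.unit -> ~ dvdR 2 x.
Proof.
move=> ux [c xe]; case: HR => _ /negP h2 _ _ _; apply: h2.
apply/unitrP; exists (c / x); rewrite mulrA -xe divrr //.
by rewrite mulrC mulrA mulrC -xe mulVr.
Qed.

Lemma nev_unit (R : idomainType) (HR : local_ring_of_integers_2prime R) (x : R) :
  ~ dvdR 2 x -> x \is a GRing.unit.
Proof.
move=> nx; case: (HR) => _ _ hv _ _.
have x0 : x != 0 by apply/eqP => x0; apply: nx; rewrite x0; apply: dvdR0.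
have [[|k] [u [uu xe]]] := hv x x0; first by rewrite xe expr0 mulr1.
by exfalso; apply: nx; rewrite xe exprS mulrCA; apply: dvdR_mul.
Qed.

Lemma nev_mul (R : idomainType) (HR : local_ring_of_integers_2prime R) (x y : R) :
  ~ dvdR 2 x -> ~ dvdR 2 y -> ~ dvdR 2 (x * y).
Proof.
move=> /(nev_unit HR) ux /(nev_unit HR) uy; apply: (unit_nev HR).
by rewrite unitrM ux.
Qed.

Lemma ev_mul (R : idomainType) (HR : local_ring_of_integers_2prime R) (x y : R) :
  dvdR 2 (x * y) -> dvdR 2 x \/ dvdR 2 y.
Proof.
move=> h; case: (classic (dvdR 2 x)) => hx; [by left|right].
case: (classic (dvdR 2 y)) => hy //; exfalso; exact: (nev_mul HR hx hy).
Qed.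


Definition asb (P : Prop) : bool := if excluded_middle_informative P then true else false.
Lemma asbP (P : Prop) : asb P <-> P.
Proof. by rewrite /asb; case: excluded_middle_informative. Qed.

Lemma sqrt2 (R : idomainType) (HR : local_ring_of_integers_2prime R) (x : R) :
  exists y, dvdR 2 (y ^+ 2 - x).
Proof.
case: (HR) => _ _ _ _ [s hs].
pose cg (a b : R) := dvdR 2 (a - b).
have cgsym a b : cg a b -> cg b a by move=> h; rewrite /cg -opprB; apply: dvdRN.
have cgtr a b c : cg a b -> cg b c -> cg a c.
  by move=> h1 h2; rewrite /cg -(subrKA b); apply: dvdRD.
pose rep a := find (fun r => asb (cg a r)) s.
have rep_lt a : (rep a < size s)%N.
  rewrite -has_find; have [r rs hr] := hs a; apply/hasP; exists r => //; exact/asbP.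
have rep_cg a : cg a (nth 0 s (rep a)).
  apply/asbP; apply: (nth_find 0 (a := fun r => asb (cg a r))).
  have [r rs hr] := hs a; apply/hasP; exists r => //; exact/asbP.
have rep_eq a b : cg a b -> rep a = rep b.
  move=> hab; apply: eq_find => r; apply/idP/idP => /asbP h; apply/asbP.
    exact: cgtr (cgsym _ _ hab) h.
  exact: cgtr hab h.
have rep_eqv a b : rep a = rep b -> cg a b.
  move=> e; apply: cgtr (rep_cg a) _; rewrite e; exact: cgsym (rep_cg b).
pose S := [seq i <- iota 0 (size s) | rep (nth 0 s i) == i].
pose f i := rep ((nth 0 s i) ^+ 2).
have repS a : rep a \in S.
  rewrite mem_filter mem_iota add0n rep_lt leq0n !andbT; apply/eqP.
  apply: rep_eq; exact: cgsym (rep_cg a).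
have fS : {subset map f S <= S}.
  by move=> j /mapP [i _ ->]; apply: repS.
have finj : {in S &, injective f}.
  move=> i j; rewrite !mem_filter => /andP [/eqP hi _] /andP [/eqP hj _] e.
  apply: (etrans (esym hi)); apply: (etrans _ hj); apply: rep_eq.
  have := rep_eqv _ _ e; rewrite /cg => h.
  have : dvdR 2 ((nth 0 s i - nth 0 s j) * (nth 0 s i - nth 0 s j)).
    have -> : (nth 0 s i - nth 0 s j) * (nth 0 s i - nth 0 s j) =
      (nth 0 s i ^+ 2 - nth 0 s j ^+ 2) - 2 * (nth 0 s j * (nth 0 s i - nth 0 s j)).
      by rewrite !expr2; ring.
    by apply: dvdRB => //; apply: dvdR_mul.
  by case/(ev_mul HR).
have [_ eqS] : ((size (map f S) = size S) * (map f S =i S))%type.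
  apply: uniq_min_size fS _; last by rewrite size_map.
  by rewrite (map_inj_in_uniq finj) filter_uniq // iota_uniq.
have := repS x; rewrite -eqS => /mapP [i _ fi].
exists (nth 0 s i); have := rep_eqv _ _ fi => h.
exact: (cgsym _ _ h).
Qed.

Lemma exists_t (R : idomainType) (HR : local_ring_of_integers_2prime R) (NZ : not_Z2 R) (h : R) :
  exists t, t \is a GRing.unit /\ ~ dvdR 2 (t ^+ 2 + h).
Proof.
case: (classic (dvdR 2 (1 + h))) => h1; last by exists 1; rewrite unitr1 expr1n.
case: NZ => th [nth nth1]; exists th; split; first exact: nev_unit.
move=> h2; have : dvdR 2 ((th - 1) * (th + 1)).
  have -> : (th - 1) * (th + 1) = (th ^+ 2 + h) - (1 + h) by rewrite expr2; ring.
  exact: dvdRB.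
case/(ev_mul HR) => // h3; apply: nth1.
have -> : th - 1 = (th + 1) - 2 * 1 by ring.
by apply: dvdRB => //; apply: dvdR_mul.
Qed.

Lemma sq_nev (R : idomainType) (HR : local_ring_of_integers_2prime R) (t x : R) :
  dvdR 2 (t ^+ 2 - x) -> ~ dvdR 2 x -> ~ dvdR 2 t.
Proof.
move=> h nx ht; apply: nx; have -> : x = t * t - (t ^+ 2 - x) by rewrite expr2; ring.
by apply: dvdRB => //; apply: dvdRMr.
Qed.

Lemma rep_last (R : idomainType) (HR : local_ring_of_integers_2prime R) (NZ : not_Z2 R) (x : R) :
  ~ dvdR 2 x \/ dvdR 4 x ->
  exists p q : R, x = p ^+ 2 - q ^+ 2 /\ (~ dvdR 2 p \/ ~ dvdR 2 q).
Proof.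
have two0 : (2 : R) != 0 by case: HR.
case => [nx | [h xe]].
  have [t ht] := sqrt2 HR x.
  have nt := sq_nev HR ht nx; have ut := nev_unit HR nt.
  have [a ea] : dvdR 2 (t ^+ 2 + x).
    have -> : t ^+ 2 + x = (t ^+ 2 - x) + 2 * x by ring.
    by apply: dvdRD => //; apply: dvdR_mul.
  have [b eb] : dvdR 2 (x - t ^+ 2) by rewrite -opprB; apply: dvdRN.
  exists (a * t^-1), (b * t^-1); split.
    have e1 : (2 * 2) * (a ^+ 2 - b ^+ 2) = (2 * 2) * (t ^+ 2 * x).
      have -> : (2 * 2) * (a ^+ 2 - b ^+ 2) = (2 * a) ^+ 2 - (2 * b) ^+ 2 by ring.
      by rewrite -ea -eb; ring.
    have e2 : a ^+ 2 - b ^+ 2 = t ^+ 2 * x.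
      by apply: (mulfI (x := 2 * 2)) => //; rewrite mulf_neq0.
    have -> : (a * t^-1) ^+ 2 - (b * t^-1) ^+ 2 = (a ^+ 2 - b ^+ 2) * (t^-1) ^+ 2 by ring.
    by rewrite e2 mulrAC -exprMn mulrV // expr1n mul1r.
  case: (classic (dvdR 2 (a * t^-1))) => hp; [right => hq | by left].
  apply: nt; have -> : t = a * t^-1 - b * t^-1.
    apply: (mulfI (x := 2)) => //.
    have -> : 2 * (a * t^-1 - b * t^-1) = ((2 * a) - (2 * b)) * t^-1 by ring.
    rewrite -ea -eb; have -> : t ^+ 2 + x - (x - t ^+ 2) = 2 * t * t by rewrite expr2; ring.
    by rewrite mulrK.
  exact: dvdRB.
have [t [ut nt]] := exists_t HR NZ h.
exists (t + h * t^-1), (h * t^-1 - t); split.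
  have -> : (t + h * t^-1) ^+ 2 - (h * t^-1 - t) ^+ 2 = 4 * h * (t * t^-1) by ring.
  by rewrite mulrV // mulr1 xe mulrC.
left => hp; apply: nt.
have -> : t ^+ 2 + h = (t + h * t^-1) * t by rewrite mulrDl mulrVK // expr2.
exact: dvdRMr.
Qed.

Definition Q3 (R : idomainType) (a b c d e f x y z : R) :=
  a * x ^+ 2 + b * y ^+ 2 + c * z ^+ 2 + 2 * (d * x * y + e * x * z + f * y * z).
Definition B3 (R : idomainType) (a b c d e f x y z x' y' z' : R) :=
  a * x * x' + b * y * y' + c * z * z' + d * (x * y' + x' * y) + e * (x * z' + x' * z)
  + f * (y * z' + y' * z).
Definition prim3 (R : idomainType) (x y z : R) := ~ dvdR 2 x \/ ~ dvdR 2 y \/ ~ dvdR 2 z.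

Lemma comb_scalar (R : idomainType) (HR : local_ring_of_integers_2prime R) (qv qw bvw : R) :
  dvdR 2 qv -> dvdR 2 qw -> dvdR 2 bvw -> ~ dvdR 4 qw ->
  exists l, dvdR 4 (qv + l ^+ 2 * qw + 2 * l * bvw).
Proof.
move=> [h eh] [r er] [c ec] n4.
have nr : ~ dvdR 2 r by move=> [k ek]; apply: n4; exists k; rewrite er ek mulrA -natrM.
have ur := nev_unit HR nr.
have [l hl] := sqrt2 HR (- h * r^-1).
exists l; rewrite eh er ec; set ri := r^-1.
have -> : 2 * h + l ^+ 2 * (2 * r) + 2 * l * (2 * c) =
  2 * ((l ^+ 2 - - h * r^-1) * r + h * (1 - r^-1 * r)) + 4 * (l * c) by ring.
rewrite /ri mulVr // subrr mulr0 addr0.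
apply: dvdRD; last exact: dvdR_mul.
have -> : (4 : R) = 2 * 2 by rewrite -natrM.
by apply: dvdRMM; [apply: dvdR_refl | apply: dvdRMr].
Qed.

Lemma tern_comb (R : idomainType) (HR : local_ring_of_integers_2prime R) (a b c d e f x y z x' y' z' : R) :
  dvdR 2 (Q3 a b c d e f x y z) -> dvdR 2 (Q3 a b c d e f x' y' z') ->
  dvdR 2 (B3 a b c d e f x y z x' y' z') -> prim3 x' y' z' ->
  (forall l, prim3 (x + l * x') (y + l * y') (z + l * z')) ->
  exists x1 y1 z1, prim3 x1 y1 z1 /\ dvdR 4 (Q3 a b c d e f x1 y1 z1).
Proof.
move=> hv hw hb pw pc.
case: (classic (dvdR 4 (Q3 a b c d e f x' y' z'))) => h4; first by exists x', y', z'.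
have [l hl] := comb_scalar HR hv hw hb h4.
exists (x + l * x'), (y + l * y'), (z + l * z'); split => //.
suff -> : Q3 a b c d e f (x + l * x') (y + l * y') (z + l * z') =
   Q3 a b c d e f x y z + l ^+ 2 * Q3 a b c d e f x' y' z' + 2 * l * B3 a b c d e f x y z x' y' z' by [].
rewrite /Q3 /B3; ring.
Qed.

Lemma ev2 (R : idomainType) (x : R) : dvdR 2 (2 * x). Proof. exact: dvdR_mul. Qed.
Lemma nev1 (R : idomainType) (HR : local_ring_of_integers_2prime R) : ~ dvdR 2 (1 : R).
Proof. apply: (unit_nev HR); exact: unitr1. Qed.
Lemma nev_1ev (R : idomainType) (HR : local_ring_of_integers_2prime R) (x : R) :
  dvdR 2 x -> ~ dvdR 2 (1 + x).
Proof. move=> hx h; apply: (nev1 HR); have := dvdRB h hx; by rewrite addrK. Qed.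

Lemma tern (R : idomainType) (HR : local_ring_of_integers_2prime R) (a b c d e f : R) :
  dvdR 2 a -> dvdR 2 b -> dvdR 2 c ->
  exists x y z, prim3 x y z /\ dvdR 4 (Q3 a b c d e f x y z).
Proof.
move=> [a' ea] [b' eb] [c' ec].
have qw : dvdR 2 (Q3 a b c d e f f e d).
  rewrite /Q3 ea eb ec.
  by exists (a' * f ^+ 2 + b' * e ^+ 2 + c' * d ^+ 2 + (d * f * e + e * f * d + f * e * d)); ring.
case: (classic (dvdR 2 f)) => hf.
  case: (classic (dvdR 2 e /\ dvdR 2 d)) => [[he hd]|hed].
    apply: (tern_comb (x := 1) (y := 0) (z := 0) (x' := 0) (y' := 1) (z' := 0) HR).
    - by rewrite /Q3 ea; exists (a'); ring.
    - by rewrite /Q3 eb; exists (b'); ring.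
    - by rewrite /B3; have [k ->] := hd; exists k; ring.
    - by right; left; apply: nev1.
    - move=> l; left; rewrite mulr0 addr0; exact: nev1.
  apply: (tern_comb (x := 1) (y := 0) (z := 0) (x' := f) (y' := e) (z' := d) HR) => //.
  - by rewrite /Q3 ea; exists (a'); ring.
  - rewrite /B3; rewrite ea; exists (a' * f + d * e); ring.
  - by right; case: (classic (dvdR 2 e)) => he; [right => hd; apply: hed | left].
  - move=> l; case: (classic (dvdR 2 l)) => hl.
      by left; apply: nev_1ev => //; apply: dvdRMr.
    right; case: (classic (dvdR 2 e)) => he; [right | left]; last by rewrite add0r; apply: nev_mul.
    rewrite add0r; apply: nev_mul => // hd; exact: hed.
apply: (tern_comb (x := 0) (y := 1) (z := 0) (x' := f) (y' := e) (z' := d) HR) => //.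
- by rewrite /Q3 eb; exists (b'); ring.
- rewrite /B3; rewrite eb; exists (b' * e + d * f); ring.
- by left.
- move=> l; case: (classic (dvdR 2 l)) => hl.
    by right; left; apply: nev_1ev => //; apply: dvdRMr.
  by left; rewrite add0r; apply: nev_mul.
Qed.

Definition bf (R : idomainType) n (G : 'M[R]_n) (v w : 'rV[R]_n) : R := (v *m G *m w^T) 0 0.

Lemma bf_delta (R : idomainType) n (G : 'M[R]_n) a b :
  bf G (delta_mx 0 a) (delta_mx 0 b) = G a b.
Proof. by rewrite /bf -rowE trmx_delta -colE !mxE. Qed.

Lemma bfDl (R : idomainType) n (G : 'M[R]_n) v1 v2 w : bf G (v1 + v2) w = bf G v1 w + bf G v2 w.
Proof. by rewrite /bf !mulmxDl mxE. Qed.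
Lemma bfDr (R : idomainType) n (G : 'M[R]_n) v w1 w2 : bf G v (w1 + w2) = bf G v w1 + bf G v w2.
Proof. by rewrite /bf linearD /= mulmxDr mxE. Qed.
Lemma bfZl (R : idomainType) n (G : 'M[R]_n) c v w : bf G (c *: v) w = c * bf G v w.
Proof. by rewrite /bf -!scalemxAl mxE. Qed.
Lemma bfZr (R : idomainType) n (G : 'M[R]_n) c v w : bf G v (c *: w) = c * bf G v w.
Proof. by rewrite /bf linearZ /= -scalemxAr mxE. Qed.

Lemma findv (R : idomainType) (HR : local_ring_of_integers_2prime R) n (G : 'M[R]_n) :
  G^T = G -> (3 <= n)%N ->
  exists v : 'rV_n, (exists j, ~ dvdR 2 (v 0 j)) /\ (~ dvdR 2 (bf G v v) \/ dvdR 4 (bf G v v)).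
Proof.
move=> Gs n3.
have Gsym a b : G a b = G b a by rewrite -{1}Gs mxE.
case: (classic (exists i, ~ dvdR 2 (G i i))) => [[i hi]|hall].
  exists (delta_mx 0 i); split; first by exists i; rewrite mxE !eqxx; apply: nev1.
  by left; rewrite bf_delta.
have ev i : dvdR 2 (G i i) by apply: NNPP => h; apply: hall; exists i.
have l0 : (0 < n)%N by apply: leq_trans n3.
have l1 : (1 < n)%N by apply: leq_trans n3.
pose i0 := Ordinal l0; pose i1 := Ordinal l1; pose i2 := Ordinal n3.
have [x [y [z [hp h4]]]] := tern HR (G i0 i1) (G i0 i2) (G i1 i2) (ev i0) (ev i1) (ev i2).
pose e0 : 'rV[R]_n := delta_mx 0 i0; pose e1 : 'rV[R]_n := delta_mx 0 i1; pose e2 : 'rV[R]_n := delta_mx 0 i2.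
exists (x *: e0 + y *: e1 + z *: e2); split.
  have c0 : (x *: e0 + y *: e1 + z *: e2) 0 i0 = x by rewrite !mxE !eqxx /=; ring.
  have c1 : (x *: e0 + y *: e1 + z *: e2) 0 i1 = y by rewrite !mxE !eqxx /=; ring.
  have c2 : (x *: e0 + y *: e1 + z *: e2) 0 i2 = z by rewrite !mxE !eqxx /=; ring.
  case: hp => [h|[h|h]]; [exists i0; rewrite c0 | exists i1; rewrite c1 | exists i2; rewrite c2] => //.
right; suff -> : bf G (x *: e0 + y *: e1 + z *: e2) (x *: e0 + y *: e1 + z *: e2) =
  Q3 (G i0 i0) (G i1 i1) (G i2 i2) (G i0 i1) (G i0 i2) (G i1 i2) x y z by [].
rewrite !(bfDl, bfDr, bfZl, bfZr) !bf_delta /Q3.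
rewrite (Gsym i1 i0) (Gsym i2 i0) (Gsym i2 i1); ring.
Qed.

Lemma transform (R : idomainType) m n (G : 'M[R]_n) (M : 'M[R]_m) (P Q : 'M[R]_n) :
  Q *m P = 1%:M -> prim_represents (P *m G *m P^T) M -> prim_represents G M.
Proof.
move=> QP [X [hX [Y hY]]]; exists (Q *m X); split.
  rewrite /represents in hX *.
  rewrite trmx_mul !mulmxA -(mulmxA Q X M) -(mulmxA Q (X *m M)) hX.
  by rewrite !mulmxA QP mul1mx -mulmxA -trmx_mul QP trmx1 mulmx1.
by exists (Y *m P); rewrite mulmxA -(mulmxA Q) hY mulmx1 QP.
Qed.

Lemma diag_bf (R : idomainType) n (A G : 'M[R]_n) i :
  (A *m G *m A^T) i i = bf G (row i A) (row i A).
Proof.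
rewrite /bf !mxE; apply: eq_bigr => k _; rewrite !mxE; congr (_ * _).
by apply: eq_bigr => t _; rewrite !mxE.
Qed.

Lemma reduce_last (R : idomainType) (HR : local_ring_of_integers_2prime R) m
  (G : 'M[R]_m.+1) (v : 'rV[R]_m.+1) j :
  ~ dvdR 2 (v 0 j) ->
  exists P Q : 'M[R]_m.+1, Q *m P = 1%:M /\ (P *m G *m P^T) ord_max ord_max = bf G v v.
Proof.
move=> nv; have uv := nev_unit HR nv.
pose u : 'M[R]_(m.+1, 1) := delta_mx j 0.
pose w : 'rV[R]_m.+1 := v - delta_mx 0 j.
pose S := 1%:M + u *m w.
pose Si := 1%:M - (v 0 j)^-1 *: (u *m w).
have wu : w *m u = (v 0 j - 1)%:M.
  apply/matrixP => a b; rewrite (ord1 a) (ord1 b) !mxE (bigD1 j) //= big1.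
    by rewrite !mxE !eqxx /= mulr1 addr0 mulr1n.
  by move=> k /negPf kj; rewrite !mxE kj andbF mulr0.
have SiS : Si *m S = 1%:M.
  rewrite /Si /S mulmxDr mulmx1 mulmxBl mul1mx -scalemxAl.
  rewrite mulmxA -(mulmxA u w u) wu mul_mx_scalar -scalemxAl.
  rewrite scalerA mulrBr mulr1 mulVr // scalerBl scale1r.
  by rewrite subKr subrK.
pose T : 'M[R]_m.+1 := tperm_mx j ord_max.
have TT : T *m T = 1%:M by rewrite /T /tperm_mx -perm_mxM tperm2 perm_mx1.
exists (T *m S), (Si *m T); split.
  by rewrite mulmxA -(mulmxA Si) TT mulmx1 SiS.
have rowv : row ord_max (T *m S) = v.
  rewrite /T -xrowE; apply/rowP => k; rewrite !mxE tpermR.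
  rewrite /u /w big_ord1 !mxE !eqxx /=.
  by rewrite eq_sym mul1r addrC subrK.
by rewrite diag_bf rowv.
Qed.


Fixpoint emb (R : idomainType) p k : 'M[R]_(p, k) -> 'M[R]_(p, k) -> 'M[R]_(p, k.*2) :=
  match k return 'M[R]_(p, k) -> 'M[R]_(p, k) -> 'M[R]_(p, k.*2) with
  | 0 => fun _ _ => 0
  | k'.+1 => fun A C => row_mx (row_mx (lsubmx (A : 'M_(p, 1 + k'))) (lsubmx (C : 'M_(p, 1 + k'))) : 'M_(p, 2))
                   (emb (rsubmx (A : 'M_(p, 1 + k'))) (rsubmx (C : 'M_(p, 1 + k'))))
  end.

Fixpoint embY (R : idomainType) r k : 'M[R]_(k, r) -> 'M[R]_(k, r) -> 'M[R]_(k.*2, r) :=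
  match k return 'M[R]_(k, r) -> 'M[R]_(k, r) -> 'M[R]_(k.*2, r) with
  | 0 => fun _ _ => 0
  | k'.+1 => fun A C => col_mx (col_mx (usubmx (A : 'M_(1 + k', r))) (usubmx (C : 'M_(1 + k', r))) : 'M_(2, r))
                   (embY (dsubmx (A : 'M_(1 + k', r))) (dsubmx (C : 'M_(1 + k', r))))
  end.

Lemma Hplane_mul (R : idomainType) p (a c : 'M[R]_(p, 1)) :
  row_mx a c *m Hplane R = row_mx c a.
Proof.
apply/matrixP => i j; rewrite mxE big_ord_recl big_ord1.
have -> : (lift ord0 ord0 : 'I_2) = rshift 1 (ord0 : 'I_1) by apply: val_inj.
have -> : (ord0 : 'I_2) = lshift 1 (ord0 : 'I_1) by apply: val_inj.
case: j => [[|[|j]] hj] //.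
  have -> : Ordinal hj = lshift 1 (ord0 : 'I_1) by apply: val_inj.
  rewrite !row_mxEl !row_mxEr /Hplane !mxE /=.
  by rewrite (unsplitK (inl (ord0 : 'I_1)) : split (lshift 1 ord0) = _) mulr0 mulr1 add0r.
have -> : Ordinal hj = rshift 1 (ord0 : 'I_1) by apply: val_inj.
rewrite !row_mxEl !row_mxEr /Hplane !mxE /=.
by rewrite (unsplitK (inr (ord0 : 'I_1)) : split (rshift 1 ord0) = _) mulr0 mulr1 addr0.
Qed.

Lemma split_mul (R : idomainType) p q k (A : 'M[R]_(p, 1 + k)) (B : 'M[R]_(q, 1 + k)) :
  A *m B^T = lsubmx A *m (lsubmx B)^T + rsubmx A *m (rsubmx B)^T.
Proof. by rewrite -{1}(hsubmxK A) -{1}(hsubmxK B) tr_row_mx mul_row_col. Qed.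

Lemma step_form (R : idomainType) p q kk (X : 'M[R]_(p, 2)) (E : 'M[R]_(p, kk))
  (X' : 'M[R]_(q, 2)) (E' : 'M[R]_(q, kk)) (Hk : 'M[R]_kk) :
  row_mx X E *m block_mx (Hplane R) 0 0 Hk *m (row_mx X' E')^T =
  X *m Hplane R *m X'^T + E *m Hk *m E'^T.
Proof. by rewrite mul_row_block !mulmx0 !addr0 !add0r tr_row_mx mul_row_col. Qed.

Lemma pairT (R : idomainType) p q (a c : 'M[R]_(p, 1)) (a' c' : 'M[R]_(q, 1)) :
  (row_mx c a : 'M_(p, 2)) *m (row_mx a' c' : 'M_(q, 2))^T = c *m a'^T + a *m c'^T.
Proof. apply: etrans (mul_row_col c a a'^T c'^T); by rewrite -tr_row_mx. Qed.

Lemma emb_form (R : idomainType) p q k (A C : 'M[R]_(p, k)) (A' C' : 'M[R]_(q, k)) :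
  emb A C *m Hpow R k *m (emb A' C')^T = A *m C'^T + C *m A'^T.
Proof.
elim: k A C A' C' => [|k IH] A C A' C' /=.
  by rewrite !mul0mx (thinmx0 A) (thinmx0 C) !mul0mx addr0.
rewrite /orth; apply: etrans (step_form _ _ _ _ _) _.
rewrite IH Hplane_mul pairT.
have eA := split_mul (A : 'M_(p, 1 + k)) (C' : 'M_(q, 1 + k)).
have eC := split_mul (C : 'M_(p, 1 + k)) (A' : 'M_(q, 1 + k)).
rewrite eA eC.
by rewrite [X in X + _]addrC addrACA.
Qed.

Lemma pairY (R : idomainType) p r (a c : 'M[R]_(p, 1)) (ya yc : 'M[R]_(1, r)) :
  (row_mx a c : 'M_(p, 2)) *m (col_mx ya yc : 'M_(2, r)) = a *m ya + c *m yc.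
Proof. exact: (@mul_row_col _ p 1 1 r a c ya yc). Qed.

Lemma stepY (R : idomainType) p r kk (X : 'M[R]_(p, 2)) (E : 'M[R]_(p, kk))
  (Z : 'M[R]_(2, r)) (F : 'M[R]_(kk, r)) : row_mx X E *m col_mx Z F = X *m Z + E *m F.
Proof. exact: mul_row_col. Qed.

Lemma embY_mul (R : idomainType) p r k (A C : 'M[R]_(p, k)) (Ya Yc : 'M[R]_(k, r)) :
  emb A C *m embY Ya Yc = A *m Ya + C *m Yc.
Proof.
elim: k A C Ya Yc => [|k IH] A C Ya Yc /=.
  by rewrite mul0mx (thinmx0 A) (thinmx0 C) !mul0mx addr0.
apply: etrans (stepY _ _ _ _) _.
rewrite IH pairY.
have eA : A *m Ya = lsubmx (A : 'M_(p, 1 + k)) *m usubmx (Ya : 'M_(1 + k, r)) +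
   rsubmx (A : 'M_(p, 1 + k)) *m dsubmx (Ya : 'M_(1 + k, r)).
  by rewrite -mul_row_col hsubmxK vsubmxK.
have eC : C *m Yc = lsubmx (C : 'M_(p, 1 + k)) *m usubmx (Yc : 'M_(1 + k, r)) +
   rsubmx (C : 'M_(p, 1 + k)) *m dsubmx (Yc : 'M_(1 + k, r)).
  by rewrite -mul_row_col hsubmxK vsubmxK.
by rewrite eA eC addrACA.
Qed.

Lemma diag2_mul (R : idomainType) p (a c : 'M[R]_(p, 1)) :
  row_mx a c *m diag2 1 (-1) = row_mx a (- c).
Proof.
apply/matrixP => i j; rewrite mxE big_ord_recl big_ord1.
have -> : (lift ord0 ord0 : 'I_2) = rshift 1 (ord0 : 'I_1) by apply: val_inj.
have -> : (ord0 : 'I_2) = lshift 1 (ord0 : 'I_1) by apply: val_inj.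
case: j => [[|[|j]] hj] //.
  have -> : Ordinal hj = lshift 1 (ord0 : 'I_1) by apply: val_inj.
  rewrite !row_mxEl !row_mxEr /diag2 !mxE /=.
  by rewrite (unsplitK (inl (ord0 : 'I_1)) : split (lshift 1 ord0) = _) mulr0 mulr1 addr0.
have -> : Ordinal hj = rshift 1 (ord0 : 'I_1) by apply: val_inj.
rewrite !row_mxEl !row_mxEr /diag2 !mxE /=.
by rewrite (unsplitK (inr (ord0 : 'I_1)) : split (rshift 1 ord0) = _) mulr0 add0r mxE mulrN1.
Qed.

Lemma pairT2 (R : idomainType) p q (a c : 'M[R]_(p, 1)) (a' c' : 'M[R]_(q, 1)) :
  row_mx a c *m (row_mx a' c')^T = a *m a'^T + c *m c'^T.
Proof. by rewrite tr_row_mx mul_row_col. Qed.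

Lemma full_form (R : idomainType) p q k (A C : 'M[R]_(p, k)) (A' C' : 'M[R]_(q, k))
  (a c : 'M[R]_(p, 1)) (a' c' : 'M[R]_(q, 1)) :
  row_mx (emb A C) (row_mx a c : 'M_(p, 2)) *m orth (Hpow R k) (diag2 1 (-1)) *m
  (row_mx (emb A' C') (row_mx a' c' : 'M_(q, 2)))^T =
  A *m C'^T + C *m A'^T + (a *m a'^T - c *m c'^T).
Proof.
rewrite /orth mul_row_block !mulmx0 !addr0 !add0r tr_row_mx mul_row_col emb_form.
rewrite diag2_mul; congr (_ + _).
apply: etrans (pairT2 _ _ _ _) _.
by rewrite mulNmx.
Qed.


Lemma sum_lift1 (R : idomainType) m (f : 'I_m -> R) t0 :
  \sum_(t < m) (lift ord_max t0 == lift ord_max t)%:R * f t = f t0.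
Proof.
rewrite (bigD1 t0) //= eqxx mul1r big1 ?addr0 // => t /negPf tt0.
by rewrite (inj_eq (@lift_inj _ ord_max)) eq_sym tt0 mul0r.
Qed.

Lemma sum_lift0 (R : idomainType) m (f : 'I_m -> R) :
  \sum_(t < m) ((ord_max : 'I_m.+1) == lift ord_max t)%:R * f t = 0.
Proof. by apply: big1 => t _; rewrite (negPf (neq_lift _ _)) mul0r. Qed.

Definition Amx (R : idomainType) m : 'M[R]_(m.+1, m) :=
  \matrix_(i, t) (i == lift ord_max t)%:R.

Lemma primaux (R : idomainType) m (z : 'cV[R]_m.+1) :
  z ord_max ord0 \is a GRing.unit ->
  exists (Ya : 'M[R]_(m, m.+1)) (yz : 'M[R]_(1, m.+1)), Amx R m *m Ya + z *m yz = 1%:M.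
Proof.
move=> uz.
exists (\matrix_(t, k) ((lift ord_max t == k)%:R - (k == ord_max)%:R * z (lift ord_max t) ord0 / z ord_max ord0)).
exists (\row_k ((k == ord_max)%:R / z ord_max ord0)).
apply/matrixP => i k; rewrite !mxE big_ord1 !mxE.
under eq_bigr do rewrite !mxE.
case: (unliftP ord_max i) => [t0 ->|->].
  rewrite sum_lift1; set b := (k == ord_max)%:R; set zi := z _ ord0; set c := (z ord_max ord0)^-1.
  ring.
rewrite sum_lift0 add0r (eq_sym ord_max k).
by rewrite mulrCA mulrV // mulr1.
Qed.

Lemma construct (R : idomainType) (HR : local_ring_of_integers_2prime R) m (G : 'M[R]_m.+1) (pl ql : R) :
  G^T = G -> G ord_max ord_max = pl ^+ 2 - ql ^+ 2 -> (~ dvdR 2 pl \/ ~ dvdR 2 ql) ->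
  prim_represents G (orth (Hpow R m) (diag2 1 (-1))).
Proof.
move=> Gs Gl hpq.
have Gsym a b : G a b = G b a by rewrite -{1}Gs mxE.
have : forall i : 'I_m.+1, exists y : R, dvdR 2 (G i i - y ^+ 2).
  move=> i; have [y hy] := sqrt2 HR (G i i).
  by exists y; rewrite -opprB; apply: dvdRN.
case/fin_all_exists => pf hpf.
pose pv : 'cV[R]_m.+1 := \col_i (if i == ord_max then pl else pf i).
pose qv : 'cV[R]_m.+1 := \col_i (if i == ord_max then ql else 0).
pose G' := G - pv *m pv^T + qv *m qv^T.
have G'E i k : G' i k = G i k - pv i ord0 * pv k ord0 + qv i ord0 * qv k ord0.
  by rewrite !mxE !big_ord1 !mxE.
have G'sym i k : G' i k = G' k i by rewrite !G'E Gsym; ring.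
have G'll : G' ord_max ord_max = 0 by rewrite G'E !mxE eqxx Gl; ring.
have : forall i : 'I_m.+1, exists h : R, i != ord_max -> G' i i = 2 * h.
  move=> i; case: (eqVneq i ord_max) => [_|il]; first by exists 0.
  have [c ec] := hpf i; exists c => _; rewrite G'E !mxE (negPf il) mulr0 addr0.
  by rewrite -expr2.
case/fin_all_exists => hf hhf.
have G'def : G' = G - pv *m pv^T + qv *m qv^T by [].
clearbody G'.
pose D : 'M[R]_m.+1 := \matrix_(i, k) (if k == ord_max then 0 else if i == ord_max then G' i k
   else if (i < k)%N then G' i k else if i == k then hf i else 0).
have DD : D + D^T = G'.
  apply/matrixP => i k; rewrite !mxE.
  case: (eqVneq k ord_max) => [->|kl].
    case: (eqVneq i ord_max) => [->|il]; first by rewrite G'll addr0.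
    by rewrite add0r G'sym.
  case: (eqVneq i ord_max) => [->|il]; first by rewrite addr0.
  case: (ltngtP i k) => h.
  - have -> : (k == i) = false by apply/negP => /eqP e; rewrite e ltnn in h.
    by rewrite addr0.
  - have -> : (i == k) = false by apply/negP => /eqP e; rewrite e ltnn in h.
    by rewrite add0r G'sym.
  - have ik : i = k by apply: val_inj.
    by rewrite -ik eqxx hhf // -mulr2n mulr_natl.
pose A := Amx R m.
pose C : 'M[R]_(m.+1, m) := \matrix_(i, t) D i (lift ord_max t).
have CA : C *m A^T = D.
  apply/matrixP => i k; rewrite /C /A /Amx !mxE.
  under eq_bigr do rewrite !mxE mulrC.
  case: (unliftP ord_max k) => [t0 ->|->]; first by rewrite sum_lift1.
  by rewrite sum_lift0 eqxx.
have AC : A *m C^T = D^T by rewrite -CA trmx_mul trmxK.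
have rep : represents G (orth (Hpow R m) (diag2 1 (-1)))
    (row_mx (emb A C) (row_mx pv qv : 'M_(m.+1, 2))).
  rewrite /represents full_form AC CA (addrC D^T) DD G'def.
  by rewrite -addrA (addrC (qv *m qv^T)) subrK subrK.
exists (row_mx (emb A C) (row_mx pv qv : 'M_(m.+1, 2))); split => //.
case: hpq => hn.
  have uz : pv ord_max ord0 \is a GRing.unit by rewrite mxE eqxx; apply: nev_unit.
  have [Ya [yz e]] := primaux uz.
  exists (col_mx (embY Ya 0) (col_mx yz 0 : 'M_(2, m.+1))).
  by rewrite mul_row_col embY_mul pairY !mulmx0 !addr0.
have uz : qv ord_max ord0 \is a GRing.unit by rewrite mxE eqxx; apply: nev_unit.
have [Ya [yz e]] := primaux uz.
exists (col_mx (embY Ya 0) (col_mx (0 : 'M_(1, m.+1)) yz : 'M_(2, m.+1))).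
by rewrite mul_row_col embY_mul pairY !mulmx0 !addr0 add0r.
Qed.


Lemma universal (R : idomainType) (HR : local_ring_of_integers_2prime R) (NZ : not_Z2 R) n :
  (3 <= n)%N -> prim_n_universal n (orth (Hpow R n.-1) (diag2 (1 : R) (-1))).
Proof.
case: n => [//|m] n3 G [Gs _] /=.
have [v [[j hj] hv]] := findv HR Gs n3.
have [P [Q [QP e]]] := reduce_last HR G hj.
apply: (transform QP).
have [p [q [epq hpq]]] := rep_last HR NZ hv.
apply: (construct HR (pl := p) (ql := q)) => //.
  by rewrite !trmx_mul trmxK Gs mulmxA.
by rewrite e.
Qed.

Lemma det_Hplane (R : idomainType) : \det (Hplane R) = -1.
Proof.
rewrite (expand_det_row _ ord0) big_ord_recl big_ord1 /cofactor !det_mx11 !mxE /=.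
by rewrite /bump /=; ring.
Qed.

Lemma det_diag2 (R : idomainType) (a b : R) : \det (diag2 a b) = a * b.
Proof.
rewrite (expand_det_row _ ord0) big_ord_recl big_ord1 /cofactor !det_mx11 !mxE /=.
by rewrite /bump /=; ring.
Qed.

Lemma Hplane_sym (R : idomainType) : (Hplane R)^T = Hplane R.
Proof. by apply/matrixP => i j; rewrite !mxE eq_sym. Qed.

Lemma diag2_sym (R : idomainType) (a b : R) : (diag2 a b)^T = diag2 a b.
Proof. by apply/matrixP => i j; rewrite !mxE eq_sym; case: eqP => // ->. Qed.

Lemma orth_sym (R : idomainType) a b (A : 'M[R]_a) (B : 'M[R]_b) :
  A^T = A -> B^T = B -> (orth A B)^T = orth A B.
Proof. by move=> hA hB; rewrite /orth tr_block_mx hA hB !trmx0. Qed.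

Lemma det_orth (R : idomainType) a b (A : 'M[R]_a) (B : 'M[R]_b) :
  \det (orth A B) = \det A * \det B.
Proof. exact: det_ublock. Qed.

Lemma Hpow_sym (R : idomainType) k : (Hpow R k)^T = Hpow R k.
Proof.
elim: k => [|k IH] /=; first by rewrite trmx0.
exact: (orth_sym (Hplane_sym R) IH).
Qed.

Lemma det_Hpow (R : idomainType) k : \det (Hpow R k) = (-1) ^+ k.
Proof.
elim: k => [|k IH] /=; first by rewrite det_mx00.
by rewrite (det_orth (Hplane R) (Hpow R k)) IH det_Hplane exprS.
Qed.

Lemma M_lattice (R : idomainType) (HR : local_ring_of_integers_2prime R) k :
  lattice (orth (Hpow R k) (diag2 (1 : R) (-1))).
Proof.
split; first by apply: orth_sym; [apply: Hpow_sym | apply: diag2_sym].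
rewrite det_orth det_Hpow det_diag2 mul1r -exprSr.
by rewrite expf_eq0 oppr_eq0 oner_eq0 andbF.
Qed.


Lemma det_cong (R : idomainType) k (A B F : 'M[R]_k) :
  A = B + 2 *: F -> dvdR 2 (\det A - \det B).
Proof.
move=> eA.
have hAB i j : dvdR 2 (A i j - B i j).
  by rewrite eA !mxE addrAC subrr add0r; apply: dvdR_mul.
rewrite /determinant.
apply: (big_ind2 (fun x y => dvdR 2 (x - y))).
- by rewrite subrr; apply: dvdR0.
- move=> x1 x2 y1 y2 h1 h2.
  have -> : x1 + y1 - (x2 + y2) = (x1 - x2) + (y1 - y2) by ring.
  exact: dvdRD.
move=> s _.
rewrite -mulrBr.
apply: dvdRMl.
apply: (big_ind2 (fun x y => dvdR 2 (x - y))).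
- by rewrite subrr; apply: dvdR0.
- move=> x1 x2 y1 y2 h1 h2.
  have -> : x1 * y1 - x2 * y2 = x1 * (y1 - y2) + (x1 - x2) * y2 by ring.
  by apply: dvdRD; [apply: dvdRMl | apply: dvdRMr].
- by move=> i _; apply: hAB.
Qed.

Lemma E0_unit (R : idomainType) n (u : R) (Z : 'M[R]_n) : u \is a GRing.unit ->
  \det (block_mx 0 u%:M u%:M (u *: Z)) \is a GRing.unit.
Proof.
move=> uu.
pose Ei := block_mx (- (u^-1 *: Z)) (u^-1)%:M (u^-1)%:M (0 : 'M[R]_n).
have h : block_mx 0 u%:M u%:M (u *: Z) *m Ei = 1%:M.
  rewrite /Ei mulmx_block !mul0mx !add0r !mulmx0 !addr0 -!scalar_mxM mulrV //.
  rewrite mul_scalar_mx scalerN scalerA mulrV // scale1r.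
  rewrite mul_mx_scalar scalerA mulrC mulrV // scale1r addNr.
  by rewrite scalar_mx_block.
apply/unitrP; exists (\det Ei); rewrite -!det_mulmx h det1; split => //.
by rewrite (mulmx1C h) det1.
Qed.

Lemma lower (R : idomainType) (HR : local_ring_of_integers_2prime R) n m (M : 'M[R]_m) :
  lattice M -> prim_n_universal n M -> (n + n <= m)%N.
Proof.
move=> [Ms dM] hU.
case: (HR) => two0 _ hv _ _.
have [s [u [uu du]]] := hv _ dM.
pose G : 'M[R]_n := (2 ^+ s.+1)%:M.
have [X [hX [Y hY]]] : prim_represents G M.
  apply: hU; split; first by rewrite tr_scalar_mx.
  by rewrite det_scalar !expf_neq0.
move: du; set d := \det M => du.
pose N := \adj M.
have MN : M *m N = d%:M := mul_mx_adj M.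
have NM : N *m M = d%:M := mul_adj_mx M.
have Ns : N^T = N by rewrite /N trmx_adj Ms.
pose Z := Y^T *m N *m Y.
pose Cm := row_mx X^T (N *m Y).
have eD : Cm^T *m M *m Cm = block_mx G (d%:M) (d%:M) (d *: Z).
  rewrite /Cm tr_row_mx trmxK trmx_mul Ns mul_col_mx mul_col_row.
  have e1 : Y^T *m N *m M = d *: Y^T by rewrite -mulmxA NM mul_mx_scalar.
  rewrite e1 -!scalemxAl -trmx_mul hY trmx1 scalemx1.
  rewrite (mulmxA (X *m M) N Y) -(mulmxA X M N) MN mul_mx_scalar -scalemxAl hY scalemx1.
  by rewrite hX /Z (mulmxA Y^T N Y).
pose E := block_mx (2%:M : 'M[R]_n) u%:M u%:M (u *: Z).
have DE : Cm^T *m M *m Cm = 2 ^+ s *: E.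
  rewrite eD /E scale_block_mx !scale_scalar_mx scalerA /G du exprSr (mulrC u).
  by [].
pose E0 := block_mx (0 : 'M[R]_n) u%:M u%:M (u *: Z).
have hE : dvdR 2 (\det E - \det E0).
  apply: (@det_cong _ _ _ _ (block_mx 1%:M 0 0 0)).
  rewrite /E /E0 scale_block_mx add_block_mx !scaler0 !addr0 add0r scalemx1.
  by rewrite -[2%:M](mulr1n) .
have nE0 : ~ dvdR 2 (\det E0) := unit_nev HR (E0_unit Z uu).
have nE : ~ dvdR 2 (\det E).
  by move=> h; apply: nE0; have := dvdRB h hE; rewrite subKr.
have E0ne : \det E != 0 by apply/eqP => h0; apply: nE; rewrite h0; apply: dvdR0.
have dD : \det (Cm^T *m M *m Cm) != 0 by rewrite DE detZ mulf_neq0 // !expf_neq0.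
pose f := @tofrac R.
have hr : \rank (map_mx f (Cm^T *m M *m Cm)) = (n + n)%N.
  by apply: mxrank_unit; rewrite unitmxE det_map_mx unitfE tofrac_eq0.
rewrite -hr !map_mxM.
apply: leq_trans (mxrankM_maxl _ _) _; apply: leq_trans (mxrankM_maxl _ _) _.
exact: rank_leq_col.
Qed.


Theorem theorem5p3 (R : idomainType) :
  local_ring_of_integers_2prime R -> not_Z2 R ->
  forall n : nat, (3 <= n)%N ->
    prim_n_universal n (orth (Hpow R n.-1) (diag2 (1 : R) (-1))) /\
    u_star_eq R n (2 * n).
Proof.
move=> HR NZ n n3; split; first exact: universal.
case: n n3 => [//|m] n3.
have -> : (2 * m.+1)%N = (m.*2 + 2)%N by lia.
split.
  exists (orth (Hpow R m) (diag2 (1 : R) (-1))); split; first exact: M_lattice.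
  exact: (universal HR NZ n3).
move=> k M hL hU; have := lower HR hL hU.
lia.
Qed.
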